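(* Let $T_1$ and $T_2$ be equidistant trees on leaf set $\{1,\dots,n\}$ with ultrametrics $u^1,u^2\in\mathbb{R}^e$, $e=\binom n2$. If $(\operatorname{argmax})^i\{u^1\}=(\operatorname{argmax})^i\{u^2\}$ for all $0<i<e$, then $T_1$ and $T_2$ have the same tree topology.
   Context: An equidistant tree is a rooted phylogenetic tree with nonnegative edge lengths and all root-to-leaf distances equal; its ultrametric is the vector $u=(u_{12},\dots,u_{n-1,n})$ of pairwise leaf distances (for all distinct $i,j,k$ the maximum of $u_{ij},u_{ik},u_{jk}$ is attained at least twice). For a vector $x$, $(\operatorname{argmax})^i\{x\}$ denotes the set of indices of entries of $x$ achieving the $i$-th largest value among the entries of $x$. *)

(* Defs.v *)
From HB Require Import structures.
From mathcomp Require Import all_boot all_order all_algebra.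
Set Implicit Arguments. Unset Strict Implicit. Unset Printing Implicit Defensive.
Import Order.TTheory GRing.Theory Num.Theory.
Local Open Scope ring_scope.

(* A rooted phylogenetic tree on leaf set 'I_n = {1,...,n} is encoded by its
   hierarchy of clusters H (the leaf sets below each vertex); each non-root
   vertex v (cluster C) carries the length w C of the edge from v to its parent. *)
Definition hierarchy (n : nat) (H : {set {set 'I_n}}) : Prop :=
  [/\ [set: 'I_n] \in H, set0 \notin H, (forall i : 'I_n, [set i] \in H) &
      (forall A B, A \in H -> B \in H ->
         [|| A \subset B, B \subset A | [disjoint A & B]])].

Definition root_dist (R : realFieldType) (n : nat) (H : {set {set 'I_n}})
  (w : {set 'I_n} -> R) (i : 'I_n) : R :=
  \sum_(C in H | (C != [set: 'I_n]) && (i \in C)) w C.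

Definition equidistant_tree (R : realFieldType) (n : nat) (H : {set {set 'I_n}})
  (w : {set 'I_n} -> R) : Prop :=
  [/\ hierarchy H,
      (forall C, C \in H -> C != [set: 'I_n] -> 0 <= w C) &
      (forall i j : 'I_n, root_dist H w i = root_dist H w j)].

(* coordinates of R^e, e = 'C(n,2): unordered pairs {i,j}, encoded as i < j *)
Definition pair_idx (n : nat) := {p : 'I_n * 'I_n | (p.1 < p.2)%N}.

Definition tree_dist (R : realFieldType) (n : nat) (H : {set {set 'I_n}})
  (w : {set 'I_n} -> R) (i j : 'I_n) : R :=
  \sum_(C in H | (C != [set: 'I_n]) && ((i \in C) != (j \in C))) w C.

Definition ultrametric (R : realFieldType) (n : nat) (H : {set {set 'I_n}})
  (w : {set 'I_n} -> R) : pair_idx n -> R :=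
  fun p => tree_dist H w (val p).1 (val p).2.

Definition sorted_vals (R : realFieldType) (I : finType) (x : I -> R) : seq R :=
  sort (fun a b => b <= a) (undup [seq x p | p <- enum I]).

(* (argmax)^k {x}: indices achieving the k-th largest value (k >= 1);
   empty if x has fewer than k distinct values *)
Definition argmax_k (R : realFieldType) (I : finType) (k : nat) (x : I -> R)
  : {set I} :=
  [set p | (k.-1 < size (sorted_vals x))%N && (x p == nth 0 (sorted_vals x) k.-1)].

(* tree topology: the nontrivial clusters (neither singletons nor the whole leaf
   set) whose edge has positive length, i.e. the rooted tree shape after
   contracting edges of length zero *)
Definition topology (R : realFieldType) (n : nat) (H : {set {set 'I_n}})
  (w : {set 'I_n} -> R) : {set {set 'I_n}} :=
  [set C in H | [&& (1 < #|C|)%N, C != [set: 'I_n] & 0 < w C]].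

(* Main.v *)
Require Import Defs.
From HB Require Import structures.
From mathcomp Require Import all_boot all_order all_algebra.
From mathcomp Require Import zify ring lra.
Import Order.TTheory GRing.Theory Num.Theory.
Local Open Scope ring_scope.

Section Ranks.
Variables (R : realFieldType) (I : finType) (x : I -> R).
Let s := sorted_vals x.
Definition rk p := index (x p) s.

Lemma s_uniq : uniq s.
Proof. by rewrite /s /sorted_vals sort_uniq undup_uniq. Qed.

Lemma s_sorted : sorted (fun a b : R => b <= a) s.
Proof. apply: sort_sorted => a b; exact: le_total. Qed.

Lemma s_mem p : x p \in s.
Proof. by rewrite /s /sorted_vals mem_sort mem_undup map_f // mem_enum. Qed.

Lemma s_size : (size s <= #|I|)%N.
Proof.
rewrite /s /sorted_vals size_sort; apply: leq_trans (size_undup _) _.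
by rewrite size_map cardE.
Qed.

Lemma rk_lt p : (rk p < size s)%N.
Proof. by rewrite /rk index_mem s_mem. Qed.

Lemma rk_nth p : nth 0 s (rk p) = x p.
Proof. by rewrite /rk nth_index // s_mem. Qed.

Lemma rk_ltE p q : (x p < x q) = (rk q < rk p)%N.
Proof.
have tr : transitive (fun a b : R => b <= a).
  by move=> a b c h1 h2; apply: le_trans h2 h1.
have rf : reflexive (fun a b : R => b <= a) by move=> a; exact: lexx.
case: (leqP (rk p) (rk q)) => h.
  have := sorted_leq_nth tr rf 0 s_sorted _ _ (rk_lt p) (rk_lt q) h.
  by rewrite !rk_nth /= => hh; rewrite ltNge hh.
have := sorted_leq_nth tr rf 0 s_sorted _ _ (rk_lt q) (rk_lt p) (ltnW h).
rewrite !rk_nth /= lt_neqAle => -> ; rewrite andbT.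
have := nth_uniq 0 (rk_lt p) (rk_lt q) s_uniq; rewrite !rk_nth => ->.
by rewrite neq_ltn h orbT.
Qed.

Lemma mem_argmax k p : (0 < k)%N -> (p \in argmax_k k x) = (rk p == k.-1).
Proof.
move=> k0; rewrite inE -/s; apply/andP/eqP.
  case=> h /eqP e; by rewrite /rk e index_uniq // s_uniq.
by move=> <-; rewrite rk_lt rk_nth.
Qed.
End Ranks.
Arguments rk {R I} x p.
Arguments rk_lt {R I} x p.
Arguments rk_ltE {R I} x p q.
Arguments mem_argmax {R I} x k p.

Lemma card_pair (R : realFieldType) n (u : pair_idx n -> R) :
  (size (sorted_vals u) <= 'C(n, 2))%N.
Proof.
apply: leq_trans (@s_size _ _ u) _.
rewrite -(card_ltn_sorted_tuples 2 n).
pose f := fun p : pair_idx n => [tuple (val p).1; (val p).2].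
have finj : injective f.
  move=> [[a b] hp] [[c d] hq] /(congr1 val) /= [e1 e2]; apply: val_inj => /=.
  by rewrite e1 e2.
rewrite -(card_imset predT finj); apply: subset_leq_card.
apply/subsetP => t /imsetP [p _ ->]; rewrite inE /= andbT.
exact: (valP p).
Qed.

Lemma rank_equiv (R : realFieldType) n (u1 u2 : pair_idx n -> R) :
  (forall i : nat, (0 < i < 'C(n, 2))%N -> argmax_k i u1 = argmax_k i u2) ->
  forall p q, (u1 p < u1 q) = (u2 p < u2 q).
Proof.
move=> h.
have H12 : forall (v1 v2 : pair_idx n -> R),
   (forall i : nat, (0 < i < 'C(n, 2))%N -> argmax_k i v1 = argmax_k i v2) ->
   forall p, (rk v1 p < 'C(n,2).-1)%N -> rk v2 p = rk v1 p.
  move=> v1 v2 hv p hp.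
  have k0 : (0 < (rk v1 p).+1)%N by [].
  have := mem_argmax v1 _ p k0; rewrite hv; last by apply/andP; split => //; lia.
  by rewrite mem_argmax // eqxx => /eqP.
have b1 p : (rk u1 p < 'C(n,2))%N.
  exact: leq_trans (rk_lt _ p) (@card_pair _ _ _).
have b2 p : (rk u2 p < 'C(n,2))%N.
  exact: leq_trans (rk_lt _ p) (@card_pair _ _ _).
have E p : rk u1 p = rk u2 p.
  case: (ltnP (rk u1 p) 'C(n,2).-1) => h1; first by rewrite (H12 u1 u2 h).
  case: (ltnP (rk u2 p) 'C(n,2).-1) => h2.
    by rewrite (H12 u2 u1 (fun i hi => esym (h i hi))).
  have := b1 p; have := b2 p; lia.
by move=> p q; rewrite !rk_ltE !E.
Qed.

Lemma sum_le (R : realFieldType) (T : finType) (P Q : pred T) (w : T -> R) :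
  (forall D, P D -> ~~ Q D -> w D = 0) -> (forall D, Q D -> 0 <= w D) ->
  \sum_(D | P D) w D <= \sum_(D | Q D) w D.
Proof.
move=> h1 h2; rewrite [X in X <= _]big_mkcond [X in _ <= X]big_mkcond /=.
apply: ler_sum => D _.
case: (boolP (P D)) => pD; case: (boolP (Q D)) => qD //.
- by rewrite h1.
- exact: h2.
Qed.

Section Tree.
Variables (R : realFieldType) (n : nat) (H : {set {set 'I_n}}) (w : {set 'I_n} -> R).

Definition sH (i j : 'I_n) : R :=
  \sum_(C in H | (C != [set: 'I_n]) && (i \in C) && (j \in C)) w C.

Lemma td_sH i j :
  tree_dist H w i j + 2 * sH i j = root_dist H w i + root_dist H w j.
Proof.
rewrite /tree_dist /sH /root_dist.
rewrite big_distrr /=.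
rewrite big_mkcond [X in _ + X = _]big_mkcond [X in _ = X + _]big_mkcond [X in _ = _ + X]big_mkcond -!big_split /=.
apply: eq_bigr => C _.
case: (C \in H); case: (C != _); case: (i \in C); case: (j \in C) => /=; lra.
Qed.

Hypothesis eq : equidistant_tree H w.

Lemma td_lt i j k : (tree_dist H w i j < tree_dist H w i k) = (sH i k < sH i j).
Proof.
case: eq => _ _ rd.
have e1 := td_sH i j; have e2 := td_sH i k.
rewrite (rd j i) in e1; rewrite (rd k i) in e2.
apply/idP/idP => h; lra.
Qed.

Lemma td_sym i j : tree_dist H w i j = tree_dist H w j i.
Proof. by apply: eq_bigl => C; rewrite [(i \in C) == _]eq_sym. Qed.

End Tree.
Arguments sH {R n} H w i j.
Arguments td_lt {R n H w} eq i j k.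
Arguments td_sym {R n} H w i j.
Section T3.
Variables (R : realFieldType) (n : nat) (H : {set {set 'I_n}}) (w : {set 'I_n} -> R).
Hypothesis eq : equidistant_tree H w.

Lemma lam A B x : A \in H -> B \in H -> x \in A -> x \in B ->
  (A \subset B) || (B \subset A).
Proof.
case: eq => hh _ _ AH BH xA xB; case: hh => _ _ _ hl.
case/or3P: (hl A B AH BH) => [hh|hh|hd]; [by rewrite hh | by rewrite hh orbT | idtac].
by rewrite (disjointFr hd xA) in xB.
Qed.

Lemma wge0 D : D \in H -> D != [set: 'I_n] -> 0 <= w D.
Proof. by case: eq => _ h _; apply: h. Qed.

Lemma topo_fwd C i j k : C \in H -> C != [set: 'I_n] -> 0 < w C ->
  i \in C -> j \in C -> k \notin C -> sH H w i k < sH H w i j.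
Proof.
move=> CH CT wC iC jC kC.
rewrite /sH [X in _ < X](bigD1 C) /=; last by rewrite CH CT iC jC.
have hh : sH H w i k <= \sum_(D | ((D \in H) && ((D != [set: 'I_n]) && (i \in D) && (j \in D))) && (D != C)) w D.
  2: by apply: (le_lt_trans hh); rewrite -[X in X < _]add0r ltrD2r.
apply: sum_le => D.
  case/andP=> DH /andP[/andP[DT iD] kD].
  have jD : j \in D.
    case/orP: (lam _ _ _ DH CH iD iC) => [/subsetP/(_ k kD)|/subsetP/(_ j jC)] //.
    by rewrite (negbTE kC).
  have DC : D != C by apply/eqP => e; rewrite -e kD in kC.
  by rewrite DH DT iD jD DC.
by case/andP=> /and3P [DH /andP[DT _] _] _; apply: wge0.
Qed.

Lemma key (C A : {set 'I_n}) : (1 < #|C|)%N -> C \subset A -> A \in H ->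
  (forall B, B \in H -> C \subset B -> (#|A| <= #|B|)%N) ->
  exists i j, [/\ i \in C, j \in C, i != j &
    forall D, D \in H -> i \in D -> j \in D -> A \subset D].
Proof.
move=> C1 CA AH Amin.
have [i iC] : exists i, i \in C.
  by apply/set0Pn; apply: contraTneq C1 => ->; rewrite cards0.
have hi : ([set i] \in H) && (i \in [set i]) && ([set i] \subset A) && ~~ (C \subset [set i]).
  case: eq => [[_ _ h1 _] _ _]; rewrite h1 set11 sub1set (subsetP CA _ iC) /=.
  apply/negP => /subset_leq_card; rewrite cards1; lia.
case: (@arg_maxnP _ [set i] (fun X : {set 'I_n} => (X \in H) && (i \in X) && (X \subset A) && ~~ (C \subset X)) (fun X : {set 'I_n} => #|X|) hi) => X /andP[/andP[/andP[XH iX] XA] CX] Xmax.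
have [j jC jX] := subsetPn CX.
exists i, j; split => //.
  by apply: contraNneq jX => <-.
move=> D DH iD jD.
have XD : X \subset D.
  case/orP: (lam _ _ _ DH XH iD iX) => // /subsetP /(_ j jD) jX'.
  by rewrite jX' in jX.
case/orP: (lam _ _ _ DH AH iD (subsetP CA _ iC)) => // DA.
case: (boolP (C \subset D)) => CD.
  have := Amin D DH CD => cAD.
  suff -> : D = A by [].
  by apply/eqP; rewrite eqEcard DA cAD.
have := Xmax D; rewrite DH iD DA CD /= => /(_ isT) cDX.
have : X == D by rewrite eqEcard XD cDX.
by move/eqP => e; rewrite e jD in jX.
Qed.

Lemma topo_bwd (C : {set 'I_n}) : (1 < #|C|)%N -> C != [set: 'I_n] ->
  (forall i j k, i \in C -> j \in C -> k \notin C -> i != j ->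
     sH H w i k < sH H w i j) ->
  C \in H /\ 0 < w C.
Proof.
move=> C1 CT hC.
have TH : [set: 'I_n] \in H by case: eq => [[h _ _ _] _ _].
have hT : ([set: 'I_n] \in H) && (C \subset [set: 'I_n]) by rewrite TH subsetT.
case: (@arg_minnP _ [set: 'I_n] (fun X : {set 'I_n} => (X \in H) && (C \subset X)) (fun X : {set 'I_n} => #|X|) hT) => A /andP[AH CA] Amin.
have Amin' : forall B, B \in H -> C \subset B -> (#|A| <= #|B|)%N.
  by move=> B BH CB; apply: Amin; rewrite BH CB.
have [i [j [iC jC ij hD]]] := key _ _ C1 CA AH Amin'.
case: (boolP (A \subset C)) => AC; last first.
  have [k kA kC] := subsetPn AC.
  have := hC i j k iC jC kC ij; rewrite ltNge => /negP [].
  apply: sum_le => D.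
    case/andP=> DH /andP[/andP[DT iD] jD]; have AD := hD D DH iD jD.
    by rewrite DH DT iD (subsetP AD _ kA).
  by case/andP=> DH /andP[/andP[DT _] _]; apply: wge0.
have eAC : A = C by apply/eqP; rewrite eqEsubset AC CA.
subst A.
split => //.
rewrite lt_neqAle wge0 // andbT; apply/negP => /eqP wC0.
have hP : ([set: 'I_n] \in H) && (C \proper [set: 'I_n]) by rewrite TH properT.
case: (@arg_minnP _ [set: 'I_n] (fun X : {set 'I_n} => (X \in H) && (C \proper X)) (fun X : {set 'I_n} => #|X|) hP) => P /andP[PH CP] Pmin.
have [k kP kC] : exists2 k, k \in P & k \notin C.
  by apply/subsetPn; case/properP: CP => _ [k kP kC]; apply/subsetPn; exists k.
have := hC i j k iC jC kC ij; rewrite ltNge => /negP [].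
apply: sum_le => D.
  case/andP=> DH /andP[/andP[DT iD] jD]; have CD := hD D DH iD jD.
  rewrite DH DT iD /= => kD.
  have DC : D = C.
    apply/eqP; apply: contraNT kD => DC.
    have CpD : C \proper D by rewrite properEneq eq_sym DC CD.
    case/orP: (lam _ _ _ DH PH iD (subsetP (proper_sub CP) _ iC)) => [DP|PD].
      have := Pmin D; rewrite DH CpD => /(_ isT) cPD.
      have : D == P by rewrite eqEcard DP cPD.
      by move/eqP ->.
    exact: (subsetP PD).
  by rewrite DC -wC0.
by case/andP=> DH /andP[/andP[DT _] _]; apply: wge0.
Qed.

Lemma topo_char (C : {set 'I_n}) : C \in topology H w <->
  [/\ (1 < #|C|)%N, C != [set: 'I_n] &
     forall i j k, i \in C -> j \in C -> k \notin C -> i != j ->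
     tree_dist H w i j < tree_dist H w i k].
Proof.
rewrite inE; split.
  case/and4P=> CH C1 CT wC; split => // i j k iC jC kC _.
  by rewrite (td_lt eq); exact: (topo_fwd _ _ _ _ CH CT wC iC jC kC).
case=> C1 CT h.
have [CH wC] : C \in H /\ 0 < w C.
  by apply: topo_bwd => // i j k iC jC kC ij; rewrite -(td_lt eq); apply: h.
by rewrite CH C1 CT wC.
Qed.

End T3.

Lemma pair_ex n (i j : 'I_n) : i != j ->
  exists p : pair_idx n, (val p = (i, j)) \/ (val p = (j, i)).
Proof.
move=> ij; case: (ltngtP i j) => h.
- by exists (exist _ (i, j) h); left.
- by exists (exist _ (j, i) h); right.
- by move/val_inj: h => e; rewrite e eqxx in ij.
Qed.

Lemma td_ult (R : realFieldType) n (H : {set {set 'I_n}}) (w : {set 'I_n} -> R)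
  (i j : 'I_n) (p : pair_idx n) : (val p = (i, j)) \/ (val p = (j, i)) ->
  tree_dist H w i j = ultrametric H w p.
Proof. by rewrite /ultrametric; case=> ->; rewrite // td_sym. Qed.

Theorem lemma2 (R : realFieldType) (n : nat)
  (H1 H2 : {set {set 'I_n}}) (w1 w2 : {set 'I_n} -> R) :
  equidistant_tree H1 w1 -> equidistant_tree H2 w2 ->
  (forall i : nat, (0 < i < 'C(n, 2))%N ->
     argmax_k i (ultrametric H1 w1) = argmax_k i (ultrametric H2 w2)) ->
  topology H1 w1 = topology H2 w2.
Proof.
move=> e1 e2 ha.
have RE := rank_equiv _ _ _ _ ha.
have cmp : forall i j k : 'I_n, i != j -> i != k ->
    (tree_dist H1 w1 i j < tree_dist H1 w1 i k) =
    (tree_dist H2 w2 i j < tree_dist H2 w2 i k).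
  move=> i j k ij ik.
  have [p hp] := pair_ex _ _ _ ij; have [q hq] := pair_ex _ _ _ ik.
  by rewrite !(td_ult _ _ _ _ _ _ _ hp) !(td_ult _ _ _ _ _ _ _ hq) RE.
apply/setP => C; apply/idP/idP.
  move/(topo_char _ _ _ _ e1 C) => [C1 CT h]; apply/(topo_char _ _ _ _ e2 C); split => //.
  move=> i j k iC jC kC ij; rewrite -cmp //; first exact: h.
  by apply: contraNneq kC => <-.
move/(topo_char _ _ _ _ e2 C) => [C1 CT h]; apply/(topo_char _ _ _ _ e1 C); split => //.
move=> i j k iC jC kC ij; rewrite cmp //; first exact: h.
by apply: contraNneq kC => <-.
Qed.
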